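(* Let $k,\ell\ge 2$, $n\ge 1$, and let the multisets $e_1,\dots,e_{m}\subseteq\mathbb{Z}_n$ (each of size $k$) be arbitrary. Then the hypergraph $W_n$ determined by $e_1,\dots,e_m$ is orientable if and only if the weighted hypergraph $\hat W_n$ determined by $e_1,\dots,e_m$ is orientable. (In particular, for the random models, the events $\{W_n\text{ is orientable}\}$ and $\{\hat W_n\text{ is orientable}\}$ coincide.)
   Context: $\mathbb{Z}_n=\{0,\dots,n-1\}$ with arithmetic mod $n$; $[j,j+\ell)=\{j,\dots,j+\ell-1\}$ mod $n$. In the random model, $m=cn$ and each $e_i$ consists of $k$ independent uniform elements of $\mathbb{Z}_n$. A weighted hypergraph $H=(V,E,\eta)$ has weights $\eta:V\cup E\to\mathbb{N}$; an orientation assigns to each pair $(e,v)$ with $v\in e$ a number $\mu(e,v)\in\mathbb{N}_0$ such that $\sum_{v\in e}\mu(e,v)=\eta(e)$ for every $e\in E$ and $\sum_{e\ni v}\mu(e,v)\le\eta(v)$ for every $v\in V$; $H$ is orientable if an orientation exists. $W_n$: vertex set $\mathbb{Z}_n$, hyperedges $e'_i=\bigcup_{j\in e_i}[j,j+\ell)$ for $i=1,\dots,m$, all weights equal to $1$. $\hat W_n$: vertex set $\mathbb{Z}_n$ with $\eta(w)=\ell$ for every vertex $w$; ''ordinary'' edges $e_1,\dots,e_m$ with weight $1$; and ''helper'' edges $c_i=\{i,i+1\}$ for $i\in\mathbb{Z}_n$ with weight $\ell-1$. *)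

(* Defs.v *)
From mathcomp Require Import all_boot.
Set Implicit Arguments. Unset Strict Implicit. Unset Printing Implicit Defensive.

(* A weighted hypergraph with vertex type V, edge index type E (edges are
   indexed, so repeated edges are allowed), membership [mem e v] ("v in e"),
   vertex weights wV and edge weights wE.  An orientation assigns
   mu e v in N to each pair (e,v) with v in e; we encode it as a function
   on all pairs that vanishes when v is not in e. *)
Definition orientable (V E : finType) (mem : E -> pred V)
  (wV : V -> nat) (wE : E -> nat) : Prop :=
  exists mu : E -> V -> nat,
    (forall e v, ~~ mem e v -> mu e v = 0) /\
    (forall e, \sum_(v | mem e v) mu e v = wE e) /\
    (forall v, \sum_(e | mem e v) mu e v <= wV v).

(* Z_n is represented by 'I_n (n >= 1), with arithmetic mod n on values.
   Each e_i is a multiset of k elements of Z_n, given as a k-tuple. *)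

Definition W_mem (n m k l : nat) (e : 'I_m -> k.-tuple 'I_n) (i : 'I_m)
  : pred 'I_n :=
  fun w => has (fun j : 'I_n => [exists t : 'I_l, val w == (j + t) %% n])
               (e i).

Definition W_orientable (n m k l : nat) (e : 'I_m -> k.-tuple 'I_n) : Prop :=
  orientable (W_mem l e) (fun _ => 1) (fun _ => 1).

(* Edges of \hat W_n: inl i = ordinary edge e_i, inr i = helper edge
   c_i = {i, i+1 mod n}. *)
Definition What_mem (n m k : nat) (e : 'I_m -> k.-tuple 'I_n)
  (x : 'I_m + 'I_n) : pred 'I_n :=
  match x with
  | inl i => fun w => w \in e i
  | inr i => fun w => (val w == val i) || (val w == (i + 1) %% n)
  end.

Definition What_weight (n m l : nat) (x : 'I_m + 'I_n) : nat :=
  match x with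
  | inl _ => 1
  | inr _ => l - 1
  end.

Definition What_orientable (n m k l : nat) (e : 'I_m -> k.-tuple 'I_n)
  : Prop :=
  orientable (What_mem e) (fun _ => l) (@What_weight n m l).

(* Main.v *)
Require Import Defs.
From mathcomp Require Import all_boot.
From mathcomp Require Import zify.
Set Implicit Arguments. Unset Strict Implicit. Unset Printing Implicit Defensive.

Definition cd (n v p : nat) := if p <= v then v - p else v + n - p.

Lemma cd_lt n v p : p < n -> v < n -> cd n v p < n.
Proof. rewrite /cd; case: ifP => *; lia. Qed.

Lemma cd_add n v p : p < n -> v < n -> (p + cd n v p) %% n = v.
Proof.
move=> hp hv; rewrite /cd; case: ifP => h.
  by rewrite subnKC // modn_small.
have -> : p + (v + n - p) = v + n by lia.
by rewrite modnDr modn_small.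
Qed.

Lemma cd_spec n v p r : p < n -> v < n -> r < n ->
  (v == (p + r) %% n) = (cd n v p == r).
Proof.
move=> hp hv hr; rewrite -{1}(cd_add hp hv) eqn_modDl.
by rewrite !modn_small // cd_lt.
Qed.

Lemma cd_mod n p t : p < n -> cd n ((p + t) %% n) p = t %% n.
Proof.
move=> hp; have n0 : 0 < n by lia.
have hv : (p + t) %% n < n by apply: ltn_pmod.
have : (p + cd n ((p + t) %% n) p == p + t %[mod n]).
  by rewrite cd_add // modn_mod.
rewrite eqn_modDl => /eqP <-.
by rewrite [RHS]modn_small //; apply: cd_lt.
Qed.

Lemma succ_mod n u : u < n -> (u + 1) %% n = if u + 1 == n then 0 else u + 1.
Proof.
move=> hu; case: eqP => [->|h]; first by rewrite modnn.
by rewrite modn_small //; lia.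
Qed.

Lemma cd_succ n u P : P < n -> u < n ->
  cd n ((u + 1) %% n) P = if cd n u P == n - 1 then 0 else cd n u P + 1.
Proof.
move=> hP hu; rewrite succ_mod // /cd.
case: (u + 1 =P n) => h1; case: (P <= u) /idP => h2;
  try case: (P <= 0) /idP => h3; try case: (P <= u + 1) /idP => h4;
  case: eqP => h5; lia.
Qed.

Lemma sum_one (I : finType) (P : pred I) (F : I -> nat) a :
  P a -> (forall h, P h -> h = a) -> \sum_(h | P h) F h = F a.
Proof.
move=> Pa H; rewrite (bigD1 a) //= big1 ?addn0 // => h /andP[/H -> ].
by rewrite eqxx.
Qed.

Lemma sum_two (I : finType) (P : pred I) (F : I -> nat) a b :
  a != b -> P a -> P b -> (forall h, P h -> h = a \/ h = b) ->
  \sum_(h | P h) F h = F a + F b.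
Proof.
move=> ab Pa Pb H; rewrite (bigD1 a) //= (bigD1 b) /=; last by rewrite Pb eq_sym.
rewrite big1 ?addn0 // => h /andP[/andP[/H [->|->]]]; by rewrite eqxx // andbF.
Qed.

Lemma sum_lt (I : finType) (f g : I -> nat) j :
  (forall q, f q <= g q) -> f j < g j -> \sum_q f q < \sum_q g q.
Proof.
move=> H hj; rewrite (bigD1 j) // [X in _ < X](bigD1 j) //=.
by rewrite -addSn; apply: leq_add => //; apply: leq_sum => q _; apply: H.
Qed.

Lemma card_sum (I : finType) (P : pred I) : #|[pred i | P i]| = \sum_i (P i : nat).
Proof.
rewrite -sum1_card big_mkcond /=; apply: eq_bigr => i _; rewrite inE; by case: (P i).
Qed.

Definition cnt m n (p : 'I_m -> 'I_n) (v : 'I_n) := \sum_i (p i == v : nat).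

Definition Flow n m k l (e : 'I_m -> k.-tuple 'I_n) (p : 'I_m -> 'I_n) (y : 'I_n -> nat) :=
 [/\ (forall i, p i \in e i), (forall v, y v <= l - 1) &
  (forall u v : 'I_n, val v = (u + 1) %% n -> cnt p v + y u <= 1 + y v)].

Lemma succ_neq n u : n <> 1 -> u < n -> (u + 1) %% n != u.
Proof. move=> n1 hu; rewrite succ_mod //; case: (u + 1 =P n) => h; apply/eqP; lia. Qed.

Lemma succ_inj n h u : h < n -> u < n -> (h + 1) %% n = (u + 1) %% n -> h = u.
Proof.
move=> hh hu; rewrite !succ_mod //.
case: (h + 1 =P n); case: (u + 1 =P n); lia.
Qed.

Lemma ord_n1 n (a b : 'I_n) : n = 1 -> a = b.
Proof. move=> h; apply: val_inj => /=; have := ltn_ord a; have := ltn_ord b; lia. Qed.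

Lemma flow_What n m k l (e : 'I_m -> k.-tuple 'I_n) p y :
  0 < n -> 1 <= l -> Flow l e p y -> What_orientable l e.
Proof.
move=> n0 l1 [pe yl cons].
have predex : forall v : 'I_n, exists u : 'I_n, val v = (u + 1) %% n.
  move=> v; exists (Ordinal (ltn_pmod (v + n - 1) n0)) => /=.
  rewrite modnDml; have := ltn_ord v => hv.
  have -> : v + n - 1 + 1 = v + n by lia.
  by rewrite modnDr modn_small.
pose mu (x : 'I_m + 'I_n) (w : 'I_n) : nat :=
  match x with
  | inl i => (w == p i : nat)
  | inr h => if n == 1 then (if w == h then l - 1 else 0)
             else if w == h then l - 1 - y h
             else if val w == (h + 1) %% n then y h else 0
  end.
exists mu; split; [|split].
- case=> [i|h] w /=.
    by move=> h; case: eqP => // E; rewrite E pe in h.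
  move=> /norP[h1 h2]; have h1e : (w == h) = false by apply/negbTE; move: h1; apply: contra => /eqP ->.
  by rewrite h1e (negbTE h2); case: ifP.
- case=> [i|h] /=.
    by rewrite (bigD1 (p i)) //= eqxx big1 // => v /andP[_ /negbTE ->].
  case: (n =P 1) => [n1|n1].
    by rewrite (@sum_one _ _ _ h) ?eqxx // => v _; apply: ord_n1.
  pose sc := Ordinal (ltn_pmod (h + 1) n0).
  have hsc : sc != h.
    apply/negP => /eqP/(congr1 val) /=; rewrite succ_mod //.
    have := ltn_ord h; case: eqP; lia.
  have Psc : (sc == h) || (val sc == (h + 1) %% n) by rewrite eqxx orbT.
  have Hall : forall v : 'I_n, (v == h) || (val v == (h + 1) %% n) -> v = h \/ v = sc.
    by move=> v /orP[/eqP->|/eqP E]; [left|right; apply: val_inj].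
  have hsc2 : h != sc by rewrite eq_sym.
  rewrite (sum_two _ hsc2 _ Psc Hall) ?eqxx //= (negbTE hsc).
  have := yl h; lia.
- move=> v; rewrite big_sumType /=.
  set S := \sum_(i < m | _) _.
  have inlb : S <= cnt p v.
    rewrite /S /cnt big_mkcond /=.
    by apply: leq_sum => i _; case: ifP => _ //; rewrite eq_sym.
  have [u hu] := predex v.
  have := cons u v hu.
  case: (n =P 1) => [n1|n1].
    rewrite (@sum_one _ _ _ v) ?eqxx //=; last by move=> h _; apply: ord_n1.
    have -> : u = v by apply: ord_n1.
    move: inlb; lia.
  have huv : v != u.
    apply/negP => /eqP E; move: (succ_neq n1 (ltn_ord u)); rewrite -hu E eqxx //.
  have Pu : (v == u) || (val v == (u + 1) %% n) by rewrite hu eqxx orbT.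
  have Hall : forall h : 'I_n, (v == h) || (val v == (h + 1) %% n) -> h = v \/ h = u.
    move=> h /orP[/eqP->|/eqP E]; [by left|right].
    by apply: val_inj; apply: succ_inj => //=; move: E hu => /= E hu; congruence.
  rewrite (sum_two _ huv _ Pu Hall) ?eqxx //= (negbTE huv) hu eqxx.
  have := yl v; move: inlb; lia.
Qed.

Lemma What_flow n m k l (e : 'I_m -> k.-tuple 'I_n) :
  0 < n -> What_orientable l e -> exists p y, Flow l e p y.
Proof.
move=> n0 [mu [van [esum vsum]]].
have pex : forall i, exists w, (w \in e i) && (mu (inl i) w != 0).
  move=> i; case: (pickP (fun w => (w \in e i) && (mu (inl i) w != 0))) => [w Hw|none].
    by exists w.
  have := esum (inl i); rewrite /= big1 // => w hw.
  by have := none w; rewrite /= hw /= => /negbFE/eqP.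
have [p Hp] := fin_all_exists pex.
pose sc (v : 'I_n) := Ordinal (ltn_pmod (v + 1) n0).
have Hall2 : forall h : 'I_n, n <> 1 ->
   [/\ h != sc h, (val h == val h) || (val h == (h + 1) %% n),
     (val (sc h) == val h) || (val (sc h) == (h + 1) %% n) &
     forall v : 'I_n, (val v == val h) || (val v == (h + 1) %% n) -> v = h \/ v = sc h].
  move=> h n1; split; rewrite ?eqxx ?orbT //.
    by apply/eqP => /(congr1 val) /= E; have := succ_neq n1 (ltn_ord h); rewrite -E eqxx.
  by move=> v /orP[/eqP E|/eqP E]; [left|right]; apply: val_inj.
pose y (v : 'I_n) := if n == 1 then 0 else mu (inr v) (sc v).
have hy : forall v : 'I_n, n <> 1 -> mu (@inr 'I_m 'I_n v) v + y v = l - 1.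
  move=> v n1; have [H1 H2 H3 H4] := Hall2 v n1.
  have := esum (inr v); rewrite (@sum_two _ (What_mem e (inr v)) _ v (sc v) H1 H2 H3 H4) /y.
  by case: (n =P 1).
exists p, y; split.
- by move=> i; case/andP: (Hp i).
- move=> v; rewrite /y; case: (n =P 1) => [|n1]; first by [].
  by have := hy v n1; rewrite /y; case: (n =P 1) => // _; lia.
- move=> u v hu; have := vsum v; rewrite big_sumType /=.
  set S := \sum_(i < m | _) _.
  have inlb : cnt p v <= S.
    rewrite /S /cnt [X in _ <= X]big_mkcond /=.
    apply: leq_sum => i _; case: eqP => [<-|_] //.
    by case/andP: (Hp i) => -> /=; rewrite lt0n.
  case: (n =P 1) => [n1|n1].
    have evu : u = v by apply: ord_n1.
    have e1 := esum (inr v).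
    rewrite /= (@sum_one _ _ _ v) ?eqxx // in e1; last by move=> h _; apply: ord_n1.
    rewrite (@sum_one _ _ _ v) ?eqxx //; last by move=> h _; apply: ord_n1.
    rewrite e1 /y evu; case: (n =P 1) => // _; move: inlb; lia.
  have huv : v != u.
    apply/negP => /eqP E; move: (succ_neq n1 (ltn_ord u)); rewrite -hu E eqxx //.
  have Pu : (val v == val u) || (val v == (u + 1) %% n) by rewrite hu eqxx orbT.
  have Hall : forall h : 'I_n, (val v == val h) || (val v == (h + 1) %% n) -> h = v \/ h = u.
    move=> h /orP[/eqP E|/eqP E]; [left; exact: val_inj|right].
    by apply: val_inj; apply: succ_inj => //=; move: E hu => /= E hu; congruence.
  have Pv : (val v == val v) || (val v == (v + 1) %% n) by rewrite eqxx.
  rewrite (sum_two _ huv Pv Pu Hall).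
  have svu : sc u = v by apply: val_inj; rewrite /= -hu.
  have yu : mu (inr u) v = y u by rewrite /y; case: (n =P 1) => // _; rewrite svu.
  rewrite yu; have := hy v n1; move: inlb; lia.
Qed.

Lemma ptw c T n : c < n -> T < n ->
  ((if c == n-1 then 0 else c+1) == 0) + (c < T) =
  ((if c == n-1 then 0 else c+1) < T) + ((if c == n-1 then 0 else c+1) == T).
Proof.
move=> hc hT; case: (c =P n - 1) => h.
  case: (ltnP c T) => h1; case: (ltnP 0 T) => h2; case: (0 =P T) => h3 /=; lia.
case: (ltnP c T) => h1; case: (ltnP (c+1) T) => h2; case: (c + 1 =P T) => h3 /=; lia.
Qed.

Lemma sum_ge2 (I : finType) (P : pred I) (F : I -> nat) i j :
  i != j -> P i -> P j -> F i + F j <= \sum_(x | P x) F x.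
Proof.
move=> ij Pi Pj; rewrite (bigD1 i) //= (bigD1 j) /=; last by rewrite Pj eq_sym.
by rewrite addnA leq_addr.
Qed.

Lemma sum_le1 (I : finType) (T : eqType) (f : I -> T) v :
  (forall i j, f i = v -> f j = v -> i = j) -> \sum_i (f i == v : nat) <= 1.
Proof.
move=> H; case: (pickP (fun i => f i == v)) => [i /eqP fi|none].
  rewrite (bigD1 i) //= big1 ?fi ?eqxx // => j /negbTE ji.
  by case: eqP => // fj; rewrite (H _ _ fj fi) eqxx in ji.
by rewrite big1 // => i _; rewrite none.
Qed.

Lemma W_flow n m k l (e : 'I_m -> k.-tuple 'I_n) :
  0 < n -> W_orientable l e -> exists p y, Flow l e p y.
Proof.
move=> n0 [mu [van [esum vsum]]].
have wpex : forall i, exists wp : 'I_n * 'I_n,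
    [/\ mu i wp.1 != 0, wp.2 \in e i & exists t : 'I_l, val wp.1 = (wp.2 + t) %% n].
  move=> i; case: (pickP (fun w => mu i w != 0)) => [w Hw|none]; last first.
    have := esum i; rewrite /= big1 // => w _.
    by have := none w; rewrite /= => /negbFE/eqP.
  have : W_mem l e i w by apply: contraTT Hw => /van ->.
  case/hasP => j je /existsP[t /eqP ht].
  by exists (w, j); split => //; exists t.
have [wp Hwp] := fin_all_exists wpex.
pose w i := (wp i).1; pose p i := (wp i).2.
have winj : forall i j, w i = w j -> i = j.
  move=> i j wij; apply/eqP; apply/negP => /negP ij.
  have [Hi _ _] := Hwp i; have [Hj _ _] := Hwp j.
  have Pi : W_mem l e i (w i) by apply: contraTT Hi => /van ->.
  have Pj : W_mem l e j (w i) by rewrite wij; apply: contraTT Hj => /van ->.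
  have := @sum_ge2 _ (fun x => W_mem l e x (w i)) (fun x => mu x (w i)) i j ij Pi Pj.
  have := vsum (w i).
  move: Hi Hj; rewrite -/(w i) -/(w j) -wij -!lt0n /=.
  move=> h1 h2 h3 h4; have := leq_trans h4 h3.
  move: h1 h2; lia.
pose t i := cd n (w i) (p i).
have tl : forall i, t i < l.
  move=> i; have [_ _ [t0 ht0]] := Hwp i.
  rewrite /t /w ht0 cd_mod //; apply: leq_ltn_trans (leq_mod _ _) (ltn_ord t0).
have tn : forall i, t i < n by move=> i; apply: cd_lt.
have wt : forall i, val (w i) = (p i + t i) %% n by move=> i; rewrite cd_add.
pose y (v : 'I_n) := \sum_i (cd n v (p i) < t i : nat).
exists p, y; split.
- by move=> i; have [] := Hwp i.
- move=> v; rewrite /y -card_sum cardE.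
  set s := enum _.
  pose d i := t i - cd n v (p i).
  have dw : forall i, i \in s -> (v + d i) %% n = w i.
    move=> i; rewrite mem_enum inE => hi.
    rewrite wt -(cd_add (ltn_ord (p i)) (ltn_ord v)) modnDml /d.
    by rewrite -addnA subnKC // ltnW.
  rewrite -(size_map d) -(size_iota 1 (l - 1)).
  apply: uniq_leq_size.
    rewrite map_inj_in_uniq ?enum_uniq // => i j hi hj dij.
    by apply: winj; apply: val_inj; rewrite /= -dw // -dw // dij.
  move=> x /mapP[i]; rewrite mem_enum inE => hi ->.
  rewrite mem_iota /d; have := tl i; lia.
- move=> u v hu.
  have key : forall i, (p i == v : nat) + (cd n u (p i) < t i) =
                       (cd n v (p i) < t i) + (w i == v).
    move=> i.
    have e1 : (p i == v) = (cd n v (p i) == 0).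
      by rewrite -(cd_spec (ltn_ord (p i)) (ltn_ord v)) // addn0 modn_small // eq_sym.
    have e2 : (w i == v) = (cd n v (p i) == t i).
      by rewrite -(cd_spec (ltn_ord (p i)) (ltn_ord v)) // -wt eq_sym.
    have hu' : nat_of_ord v = (u + 1) %% n := hu.
    rewrite e1 e2 hu' cd_succ //.
    by apply: ptw; [apply: cd_lt | apply: tn].
  have : cnt p v + y u = y v + \sum_i (w i == v : nat).
    by rewrite /cnt /y -!big_split /=; apply: eq_bigr => i _; rewrite key.
  have := sum_le1 (fun i j (hi : w i = v) (hj : w j = v) => winj i j (etrans hi (esym hj))).
  lia.
Qed.

Lemma kappa_le m a b q i : q < m -> i < m -> a * m + q <= b * m + i -> a <= b.
Proof. move=> hq hi; nia. Qed.

Lemma kappa_inj m a b q i : q < m -> i < m -> a * m + q = b * m + i -> q = i.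
Proof.
move=> hq hi E; have := congr1 (fun x => x %% m) E => /=.
by rewrite !modnMDl !modn_small.
Qed.

Lemma flow0_W n m k l (e : 'I_m -> k.-tuple 'I_n) p y (c : 'I_n) :
  0 < n -> 1 <= l -> Flow l e p y -> y c = 0 -> W_orientable l e.
Proof.
move=> n0 l1 [pe yl cons] yc.
pose b := (c + 1) %% n.
have hb : b < n by apply: ltn_pmod.
pose L (x : 'I_n) := cd n x b.
have Ln : forall x, L x < n by move=> x; apply: cd_lt.
pose Vo r := Ordinal (ltn_pmod (b + r) n0).
pose Yf r := y (Vo r).
have VL : forall r, r < n -> L (Vo r) = r.
  by move=> r hr; rewrite /L /= cd_mod // modn_small.
have Yl : forall r, Yf r <= l - 1 by move=> r; apply: yl.
have Yn : Yf (n - 1) = 0.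
  have Vc : Vo (n - 1) = c.
    apply: val_inj => /=; rewrite /b modnDml -addnA.
    have -> : 1 + (n - 1) = n by lia.
    by rewrite modnDr modn_small.
  by rewrite /Yf Vc.
pose A r := \sum_i (L (p i) == r : nat).
have linc : forall r, r < n -> A r + (if r == 0 then 0 else Yf (r - 1)) <= 1 + Yf r.
  move=> r hr.
  have -> : A r = cnt p (Vo r).
    apply: eq_bigr => i _; congr nat_of_bool.
    rewrite /L -(cd_spec hb (ltn_ord (p i)) hr) /=.
    by [].
  case: (r =P 0) => [r0|r0].
    have := cons c (Vo r); rewrite yc; apply.
    by rewrite /= r0 addn0 modn_small.
  apply: cons => /=; rewrite modnDml.
  by have -> : b + (r - 1) + 1 = b + r by lia.
pose Cnt u v := \sum_i ((u <= L (p i)) && (L (p i) <= v) : nat).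
have cum : forall j u, u + j < n -> Cnt u (u + j) <= j + 1 + Yf (u + j).
  elim=> [|j IH] u hk.
    have -> : Cnt u (u + 0) = A u.
      apply: eq_bigr => i _; congr nat_of_bool; rewrite addn0 eqn_leq andbC //.
    have := linc u; rewrite addn0; case: (u == 0); lia.
  have -> : Cnt u (u + j.+1) = Cnt u (u + j) + A (u + j.+1).
    rewrite /Cnt /A -big_split /=; apply: eq_bigr => i _.
    case: (leqP u (L (p i))) => h1; case: (leqP (L (p i)) (u + j)) => h2;
      case: (L (p i) =P u + j.+1) => h3 /=; lia.
  have := IH u ltac:(lia); have := linc (u + j.+1) hk.
  have -> : (u + j.+1 == 0) = false by lia.
  have -> : u + j.+1 - 1 = u + j by lia.
  lia.
have cumA : forall u v, u <= v -> v < n -> Cnt u v <= v - u + 1 + (l - 1).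
  move=> u v huv hv; have := cum (v - u) u ltac:(lia).
  have -> : u + (v - u) = v by lia.
  have := Yl v; lia.
have cumB : forall u, u < n -> Cnt u (n - 1) <= n - u.
  move=> u hu; have := cum (n - 1 - u) u ltac:(lia).
  have -> : u + (n - 1 - u) = n - 1 by lia.
  rewrite Yn; lia.
pose kap i := L (p i) * m + i.
have kapL : forall i j, kap i <= kap j -> L (p i) <= L (p j).
  by move=> i j; apply: kappa_le.
have kapI : forall i j, kap i = kap j -> i = j.
  by move=> i j /kappa_inj E; apply: val_inj; apply: E.
pose cntk i u := \sum_q ((u <= L (p q)) && (kap q <= kap i) : nat).
pose M i := \max_(u < (L (p i)).+1) (u + cntk i u).
have Ma : forall i, L (p i) + 1 <= M i.
  move=> i; rewrite /M; apply: (leq_trans _ (leq_bigmax (F := fun u : 'I_(L (p i)).+1 => (u : nat) + cntk i u) ord_max)).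
  rewrite /= leq_add2l /cntk (bigD1 i) //= !leqnn /=.
  by rewrite leq_addr.
have Mb : forall i, M i <= L (p i) + l.
  move=> i; apply/bigmax_leqP => u _.
  have h1 : cntk i u <= Cnt u (L (p i)).
    apply: leq_sum => q _; case: (u <= L (p q)) => //=.
    by case: (boolP (kap q <= kap i)) => // /kapL ->.
  have := cumA u (L (p i)) ltac:(have := ltn_ord u; lia) (Ln _).
  move: h1; have := ltn_ord u; lia.
have Mc : forall i, M i <= n.
  move=> i; apply/bigmax_leqP => u _.
  have hu : u < n by have := ltn_ord u; have := Ln (p i); lia.
  have h1 : cntk i u <= Cnt u (n - 1).
    apply: leq_sum => q _; case: (u <= L (p q)) => //=.
    have := Ln (p q); case: (kap q <= kap i) => //= h; lia.
  have := cumB u hu; move: h1; lia.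
have Md : forall i j, kap i < kap j -> M i < M j.
  move=> i j hij.
  have Lij : L (p i) <= L (p j) by apply: kapL; apply: ltnW.
  have H : forall u : 'I_(L (p i)).+1, u + cntk i u < M j.
    move=> u.
    have hu : u < (L (p j)).+1 by have := ltn_ord u; lia.
    rewrite /M; apply: (leq_trans _ (leq_bigmax (F := fun u : 'I_(L (p j)).+1 => (u : nat) + cntk j u) (Ordinal hu))).
    rewrite /= -addnS leq_add2l.
    apply: (sum_lt (j := j)) => [q|].
      case: (u <= L (p q)) => //=.
      by case: (boolP (kap q <= kap i)) => // h; rewrite (leq_trans h (ltnW hij)).
    rewrite leqnn andbT.
    have -> : (kap j <= kap i) = false by apply/negbTE; rewrite -ltnNge.
    by rewrite andbF /=; have := ltn_ord u; lia.
  have : M i <= M j - 1.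
    apply/bigmax_leqP => u _; have := H u; lia.
  have := Ma j; lia.
pose S i := M i - 1.
have Sn : forall i, S i < n by move=> i; have := Mc i; have := Ma i; rewrite /S; lia.
have Sinj : forall i j, S i = S j -> i = j.
  move=> i j; rewrite /S => E.
  case: (ltngtP (kap i) (kap j)) => h.
  - have := Md _ _ h; have := Ma i; lia.
  - have := Md _ _ h; have := Ma j; lia.
  - exact: kapI.
pose w i := Ordinal (ltn_pmod (b + S i) n0).
have winj : forall i j, w i = w j -> i = j.
  move=> i j /(congr1 val) /= E; apply: Sinj.
  rewrite -(modn_small (Sn i)) -(modn_small (Sn j)) -(cd_mod (S i) hb) -(cd_mod (S j) hb).
  by rewrite E.
have wmem : forall i, W_mem l e i (w i).
  move=> i; apply/hasP; exists (p i) => //.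
  have ht : S i - L (p i) < l by have := Mb i; have := Ma i; rewrite /S; lia.
  apply/existsP; exists (Ordinal ht) => /=.
  rewrite -{1}(cd_add hb (ltn_ord (p i))) -/(L (p i)) modnDml -addnA subnKC //.
  by have := Ma i; rewrite /S; lia.
exists (fun i v => (v == w i : nat)); split; [|split].
- move=> i v hv; case: eqP => // E; by rewrite E wmem in hv.
- move=> i; rewrite (bigD1 (w i)) ?wmem //= eqxx big1 // => v /andP[_ /negbTE ->] //.
- move=> v; apply: leq_trans (sum_le1 (f := w) (v := v) _); last first.
    by move=> i j hi hj; apply: winj; rewrite hi hj.
  rewrite big_mkcond /=; apply: leq_sum => i _; case: ifP => // _.
  by rewrite eq_sym.
Qed.

Lemma flow_W n m k l (e : 'I_m -> k.-tuple 'I_n) p y :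
  0 < n -> 1 <= l -> Flow l e p y -> W_orientable l e.
Proof.
move=> n0 l1 [pe yl cons].
case: (@arg_minnP _ (Ordinal n0) xpredT y isT) => c _ cmin.
apply: (@flow0_W n m k l e p (fun v => y v - y c) c) => //; last by rewrite subnn.
split => //.
- by move=> v; have := yl v; lia.
- move=> u v huv; have := cons u v huv; have := cmin u isT; have := cmin v isT; lia.
Qed.

Unset Implicit Arguments.

Theorem proposition1 (k l n m : nat) (e : 'I_m -> k.-tuple 'I_n) :
  2 <= k -> 2 <= l -> 1 <= n ->
  (W_orientable l e <-> What_orientable l e).
Proof.
move=> hk hl hn; split => H.
- have [p [y F]] := W_flow hn H; apply: (flow_What hn _ F); lia.
- have [p [y F]] := What_flow hn H; apply: (flow_W hn _ F); lia.
Qed.
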